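(* Let $\mathbb{K}\in\{\mathbb{R},\mathbb{C}\}$ and $\mathcal{A}=(A_1,\ldots,A_d)$ positive semidefinite matrices in $\mathbb{K}^{n\times n}$. For all positive integers $k,m$ with $mk\le d$, $$\mathrm{SRel}_{mk}(\mathcal{A})\le\mathrm{SRel}_k(\mathcal{A}).$$
   Context: $\langle x,y\rangle=x^\dagger y$ with $\dagger$ the (conjugate) transpose, $\|x\|^2=\langle x,x\rangle$. A real polynomial $f$ is written $f\succeq0$ if it is a sum of squares of real polynomials; when $\mathbb{K}=\mathbb{C}$, polynomials in $x$ are regarded as real polynomials in the $2n$ real variables $\operatorname{Re}x,\operatorname{Im}x$. Let $\mathcal{S}_k$ be the set of $k$-element subsets of $\{1,\ldots,d\}$, and for $t\in\mathbb{R}^d$, $E_k(t)=\binom dk^{-1}\sum_{I\in\mathcal{S}_k}\prod_{i\in I}t_i$. Define $\mathrm{SRel}_k(\mathcal{A})=\inf\{\lambda^{1/k}:\ \lambda\ge0,\ \lambda\|x\|^{2k}-E_k(\langle x,A_1x\rangle,\ldots,\langle x,A_dx\rangle)\succeq0\}$. *)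

(* Defs.v *)
From HB Require Import structures.
From mathcomp Require Import all_boot all_order all_algebra.
From mathcomp Require Import classical_sets reals exp.
From mathcomp Require Import complex.
From mathcomp Require mpoly.

Set Implicit Arguments.
Unset Strict Implicit.
Unset Printing Implicit Defensive.
Import Order.TTheory GRing.Theory Num.Theory.
Local Open Scope ring_scope.
Local Open Scope classical_set_scope.

Definition elemE {K : fieldType} (d k : nat) (t : 'I_d -> K) : K :=
  ('C(d, k)%:R)^-1 * \sum_(I : {set 'I_d} | #|I| == k) \prod_(i in I) t i.

Definition sos_fun {R : realType} (N : nat) (f : ('I_N -> R) -> R) : Prop :=
  exists s : seq (mpoly.mpoly N R),
    forall v : 'I_N -> R, f v = \sum_(q <- s) (mpoly.meval v q) ^+ 2.

Definition vecR {R : realType} (n : nat) (v : 'I_n -> R) : 'cV[R]_n :=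
  \col_i v i.

Definition formR {R : realType} (n : nat) (A : 'M[R]_n) (x : 'cV[R]_n) : R :=
  (x^T *m A *m x) 0 0.

Definition psdR {R : realType} (n : nat) (A : 'M[R]_n) : Prop :=
  A^T = A /\ forall x : 'cV[R]_n, 0 <= formR A x.

Definition feasR {R : realType} (n d k : nat) (A : 'I_d -> 'M[R]_n) (lam : R)
  : Prop :=
  0 <= lam /\
  sos_fun (fun v : 'I_n -> R =>
     lam * (formR 1%:M (vecR v)) ^+ k
     - elemE k (fun i => formR (A i) (vecR v))).

Definition SRelR {R : realType} (n d k : nat) (A : 'I_d -> 'M[R]_n) : R :=
  inf [set powR lam (k%:R^-1) | lam in feasR k A].

(* x in C^n given by its 2n real coordinates (Re x, Im x) *)
Definition vecC {R : realType} (n : nat) (v : 'I_(n + n) -> R) : 'cV[R[i]]_n :=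
  \col_i (v (lshift n i) +i* v (rshift n i))%C.

Definition formC {R : realType} (n : nat) (A : 'M[R[i]]_n) (x : 'cV[R[i]]_n)
  : R[i] :=
  ((map_mx Num.conj x)^T *m A *m x) 0 0.

Definition psdC {R : realType} (n : nat) (A : 'M[R[i]]_n) : Prop :=
  (map_mx Num.conj A)^T = A /\ forall x : 'cV[R[i]]_n, 0 <= formC A x.

(* the polynomial lam ||x||^{2k} - E_k(<x,A_1 x>,...,<x,A_d x>), regarded as a
   real polynomial in the 2n real variables (Re x, Im x), is a sum of squares *)
Definition feasC {R : realType} (n d k : nat) (A : 'I_d -> 'M[R[i]]_n) (lam : R)
  : Prop :=
  0 <= lam /\
  exists s : seq (mpoly.mpoly (n + n) R),
    forall v : 'I_(n + n) -> R,
      (lam%:C)%C * (formC 1%:M (vecC v)) ^+ k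
      - elemE k (fun i => formC (A i) (vecC v))
      = ((\sum_(q <- s) (mpoly.meval v q) ^+ 2)%:C)%C.

Definition SRelC {R : realType} (n d k : nat) (A : 'I_d -> 'M[R[i]]_n) : R :=
  inf [set powR lam (k%:R^-1) | lam in feasC k A].

(* Main.v *)
Require Import Defs.
From HB Require Import structures.
From mathcomp Require Import all_boot all_order all_algebra all_fingroup.
From mathcomp Require Import classical_sets reals exp.
From mathcomp Require Import complex spectral sesquilinear.
From mathcomp Require Import ring lra.
From mathcomp Require Import mpoly.
Import Order.TTheory GRing.Theory Num.Theory.
Set Implicit Arguments.
Unset Strict Implicit.
Unset Printing Implicit Defensive.
Local Open Scope ring_scope.

Section SOS.
Variables (R : realType) (N : nat).
Local Notation fn := (('I_N -> R) -> R).

Definition isP (f : fn) := exists p : mpoly.mpoly N R, forall v, f v = mpoly.meval v p.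

Lemma isP_ext f g : isP f -> (forall v, f v = g v) -> isP g.
Proof. by move=> [p Hp] E; exists p => v; rewrite -E. Qed.

Lemma isP_const c : isP (fun _ => c).
Proof. by exists (mpoly.mpolyC N c) => v; rewrite mpoly.mevalC. Qed.

Lemma isP_var i : isP (fun v => v i).
Proof. by exists (@mpoly.mpolyX N R (mpoly.mnm1 i)) => v; rewrite mpoly.mevalXU. Qed.

Lemma isP_add f g : isP f -> isP g -> isP (fun v => f v + g v).
Proof. by move=> [p Hp] [q Hq]; exists (p + q) => v; rewrite mpoly.mevalD Hp Hq. Qed.

Lemma isP_opp f : isP f -> isP (fun v => - f v).
Proof. by move=> [p Hp]; exists (- p) => v; rewrite mpoly.mevalN Hp. Qed.

Lemma isP_sub f g : isP f -> isP g -> isP (fun v => f v - g v).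
Proof. by move=> Hf Hg; apply: isP_add => //; apply: isP_opp. Qed.

Lemma isP_mul f g : isP f -> isP g -> isP (fun v => f v * g v).
Proof. by move=> [p Hp] [q Hq]; exists (p * q) => v; rewrite mpoly.mevalM Hp Hq. Qed.

Lemma isP_sum (I : Type) (r : seq I) (P : pred I) (F : I -> fn) :
  (forall i, P i -> isP (F i)) -> isP (fun v => \sum_(i <- r | P i) F i v).
Proof.
move=> H; elim: r => [|x r IH].
  by apply: isP_ext (isP_const 0) _ => v; rewrite big_nil.
case Px: (P x).
  by apply: isP_ext (isP_add (H x Px) IH) _ => v; rewrite big_cons Px.
by apply: isP_ext IH _ => v; rewrite big_cons Px.
Qed.

Lemma isP_prod (I : Type) (r : seq I) (P : pred I) (F : I -> fn) :
  (forall i, P i -> isP (F i)) -> isP (fun v => \prod_(i <- r | P i) F i v).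
Proof.
move=> H; elim: r => [|x r IH].
  by apply: isP_ext (isP_const 1) _ => v; rewrite big_nil.
case Px: (P x).
  by apply: isP_ext (isP_mul (H x Px) IH) _ => v; rewrite big_cons Px.
by apply: isP_ext IH _ => v; rewrite big_cons Px.
Qed.

Definition sos (f : fn) := sos_fun f.

Lemma sos_ext f g : sos f -> (forall v, f v = g v) -> sos g.
Proof. by move=> [s Hs] E; exists s => v; rewrite -E. Qed.

Lemma sos0 : sos (fun _ => 0).
Proof. by exists [::] => v; rewrite big_nil. Qed.

Lemma sos_add f g : sos f -> sos g -> sos (fun v => f v + g v).
Proof. by move=> [s Hs] [t Ht]; exists (s ++ t) => v; rewrite big_cat /= Hs Ht. Qed.

Lemma sos_sq f : isP f -> sos (fun v => f v ^+ 2).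
Proof. by move=> [p Hp]; exists [:: p] => v; rewrite big_seq1 Hp. Qed.

Lemma sos_mul f g : sos f -> sos g -> sos (fun v => f v * g v).
Proof.
move=> [s Hs] [t Ht]; exists [seq x.1 * x.2 | x <- allpairs pair s t] => v.
rewrite Hs Ht big_map big_allpairs mulr_suml; apply: eq_bigr => p _.
rewrite mulr_sumr; apply: eq_bigr => q _.
by rewrite mpoly.mevalM exprMn.
Qed.

Lemma sos_scale c f : 0 <= c -> sos f -> sos (fun v => c * f v).
Proof.
move=> c0 Hf; apply: sos_ext (sos_mul (sos_sq (isP_const (Num.sqrt c))) Hf) _.
by move=> v /=; rewrite sqr_sqrtr.
Qed.

Lemma sos_const c : 0 <= c -> sos (fun _ => c).
Proof.
move=> c0; apply: sos_ext (sos_sq (isP_const (Num.sqrt c))) _.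
by move=> v /=; rewrite sqr_sqrtr.
Qed.

Lemma sos_sum (I : Type) (r : seq I) (P : pred I) (F : I -> fn) :
  (forall i, P i -> sos (F i)) -> sos (fun v => \sum_(i <- r | P i) F i v).
Proof.
move=> H; elim: r => [|x r IH].
  by apply: sos_ext sos0 _ => v; rewrite big_nil.
case Px: (P x).
  by apply: sos_ext (sos_add (H x Px) IH) _ => v; rewrite big_cons Px.
by apply: sos_ext IH _ => v; rewrite big_cons Px.
Qed.

Lemma sos_prod (I : Type) (r : seq I) (P : pred I) (F : I -> fn) :
  (forall i, P i -> sos (F i)) -> sos (fun v => \prod_(i <- r | P i) F i v).
Proof.
move=> H; elim: r => [|x r IH].
  by apply: sos_ext (sos_const ler01) _ => v; rewrite big_nil.
case Px: (P x).
  by apply: sos_ext (sos_mul (H x Px) IH) _ => v; rewrite big_cons Px.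
by apply: sos_ext IH _ => v; rewrite big_cons Px.
Qed.

Lemma sos_exp f n : sos f -> sos (fun v => f v ^+ n).
Proof.
move=> Hf; elim: n => [|n IH].
  by apply: sos_ext (sos_const ler01) _ => v; rewrite expr0.
by apply: sos_ext (sos_mul Hf IH) _ => v; rewrite exprS.
Qed.

Lemma sos_prod_mono (I : Type) (r : seq I) (F G : I -> fn) :
  (forall i, sos (F i)) -> (forall i, sos (fun v => G i v - F i v)) ->
  sos (fun v => \prod_(i <- r) G i v - \prod_(i <- r) F i v).
Proof.
move=> HF HG; elim: r => [|x r IH].
  by apply: sos_ext sos0 _ => v; rewrite !big_nil subrr.
have HGx : forall i, sos (G i).
  by move=> i; apply: sos_ext (sos_add (HF i) (HG i)) _ => v; rewrite addrC subrK.
apply: sos_ext (sos_add (sos_mul (HG x) (@sos_prod _ r xpredT G (fun i _ => HGx i)))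
                        (sos_mul (HF x) IH)) _ => v.
rewrite !big_cons /=; ring.
Qed.

End SOS.

Lemma perm_move (T : finType) (I J : {set T}) :
  #|I| = #|J| -> exists p : {perm T}, p @: I = J.
Proof.
have [n] := ubnP #|I :\: J|; elim: n I => [//|n IH] I Hn HIJ.
have [sIJ|nsIJ] := boolP (I \subset J).
  have /eqP <- : I == J by rewrite eqEcard sIJ HIJ leqnn.
  by exists 1%g; rewrite -[RHS]imset_id; apply: eq_imset => x; rewrite perm1.
have [x xI xJ] : exists2 x, x \in I & x \notin J.
  by move/fintype.subsetPn: nsIJ => [x ? ?]; exists x.
have [y yJ yI] : exists2 y, y \in J & y \notin I.
  have [sJI|/fintype.subsetPn [y ? ?]] := boolP (J \subset I); last by exists y.
  have /eqP eJI : J == I by rewrite eqEcard sJI HIJ leqnn.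
  by rewrite eJI xI in xJ.
set I' := tperm x y @: I.
have cI' : #|I'| = #|J| by rewrite card_imset ?HIJ //; apply: perm_inj.
have lt : (#|I' :\: J| < n)%N.
  rewrite -ltnS; apply: leq_trans Hn; apply: proper_card; apply/properP; split.
    apply/fintype.subsetP => z; rewrite !inE => /andP [zJ /imsetP [w wI ezw]]; subst z.
    rewrite zJ /=; case: (tpermP x y w) zJ => [_|_|_ _].
    - by rewrite yJ.
    - by rewrite xI.
    - by [].
  exists x; first by rewrite !inE xJ xI.
  rewrite !inE xJ /=; apply/imsetP => [[w wI]].
  case: (tpermP x y w) => [ewx|ewy|/eqP nwx _].
  - by move=> exy; rewrite exy yJ in xJ.
  - by move: wI; rewrite ewy (negbTE yI).
  - by move=> exw; rewrite exw eqxx in nwx.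
have [p Hp] := IH I' lt cI'.
exists (tperm x y * p)%g; rewrite -Hp -imset_comp; apply: eq_imset => z.
by rewrite permM.
Qed.

Section Count.
Variables (d : nat) (X : {set 'I_d}).
Definition cnt (I : {set 'I_d}) := #|[set s : {perm 'I_d} | s @: X == I]|.

Lemma cnt_le (I J : {set 'I_d}) (p : {perm 'I_d}) : p @: I = J -> (cnt I <= cnt J)%N.
Proof.
move=> HJ; rewrite /cnt.
rewrite -(card_imset _ (mulIg p)).
apply: subset_leq_card; apply/fintype.subsetP => s' /imsetP [s].
rewrite inE => /eqP Hs ->; rewrite inE -HJ -Hs -imset_comp.
by apply/eqP; apply: eq_imset => z; rewrite /= permM.
Qed.

Lemma cnt_const (I : {set 'I_d}) : #|I| = #|X| -> cnt I = cnt X.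
Proof.
move=> HI; have [p Hp] := perm_move (esym HI).
apply/eqP; rewrite eqn_leq (cnt_le Hp) andbT.
apply: (@cnt_le _ _ p^-1); rewrite -Hp -imset_comp -[RHS]imset_id.
by apply: eq_imset => z /=; rewrite permK.
Qed.
End Count.

Lemma elemE_perm (R : realType) d (X : {set 'I_d}) (f : 'I_d -> R) :
  elemE #|X| f = (d`!%:R)^-1 * \sum_(s : {perm 'I_d}) \prod_(i in X) f (s i).
Proof.
set r := #|X|.
have key : forall (G : {set 'I_d} -> R),
    \sum_(s : {perm 'I_d}) G (s @: X) = (cnt X X)%:R * \sum_(I : {set 'I_d} | #|I| == r) G I.
  move=> G; rewrite (partition_big (fun s : {perm 'I_d} => s @: X) (fun I => #|I| == r)); last first.
    by move=> s _; rewrite card_imset //; apply: perm_inj.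
  rewrite mulr_sumr; apply: eq_bigr => I /eqP HI.
  rewrite (eq_bigr (fun _ => G I)); last by move=> s /andP [_ /eqP ->].
  rewrite sumr_const -(cnt_const (X:=X) HI) mulr_natl.
  congr (_ *+ _); rewrite /cnt; apply: eq_card => s; rewrite !inE.
  by [].
have H1 := key (fun _ => 1).
rewrite sumr_const card_Sn sumr_const in H1.
have Hc : #|[pred I : {set 'I_d} | #|I| == r]| = 'C(d, r).
  by have := card_draws 'I_d r; rewrite card_ord => <-; apply: eq_card => I; rewrite inE.
rewrite Hc -natrM in H1; move/eqP: H1; rewrite eqr_nat => /eqP H1.
have H2 : \sum_(s : {perm 'I_d}) \prod_(i in X) f (s i)
          = \sum_(s : {perm 'I_d}) \prod_(j in s @: X) f j.
  by apply: eq_bigr => s _; rewrite big_imset //; move=> x y _ _; apply: perm_inj.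
rewrite H2 (key (fun I => \prod_(j in I) f j)) /elemE H1 natrM.
have Cn0 : ('C(d, r)%:R : R) != 0.
  rewrite pnatr_eq0 -lt0n bin_gt0 /r.
  by rewrite -[X in (_ <= X)%N](card_ord d) max_card.
have cn0 : ((cnt X X)%:R : R) != 0.
  rewrite pnatr_eq0; apply/negP => /eqP c0.
  by have := fact_gt0 d; rewrite H1 c0.
by field; apply/andP.
Qed.

Section Core.
Variables (R : realType) (N d : nat) (t : 'I_d -> ('I_N -> R) -> R).
Hypothesis tP : forall i, isP (t i).
Hypothesis tS : forall i, sos (t i).

Definition PS (S : {set 'I_d}) (s : {perm 'I_d}) v := \prod_(i in S) t (s i) v.
Definition DD (A S : {set 'I_d}) v := \sum_(s : {perm 'I_d}) PS A s v * PS S s v.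

Lemma PS_sos S s : sos (PS S s).
Proof. exact: sos_prod. Qed.

Lemma PS_fix (S : {set 'I_d}) (s tau : {perm 'I_d}) :
  (forall i, i \in S -> tau i = i) -> forall v, PS S (tau * s)%g v = PS S s v.
Proof.
by move=> H v; apply: eq_bigr => i iS; rewrite permM H.
Qed.

Lemma DD_swap (A T : {set 'I_d}) (p j : 'I_d) : p \in A -> j \notin A -> p \notin T -> j \notin T ->
  sos (fun v => DD A (p |: T) v - DD A (j |: T) v).
Proof.
move=> pA jA pT jT.
have pj : p != j by apply: contraNneq jA => <-.
set tau := tperm p j.
pose X s v := PS (A :\ p) s v * PS T s v.
have XS : forall s, sos (X s) by move=> s; apply: sos_mul; apply: PS_sos.
have fixt : forall S : {set 'I_d}, p \notin S -> j \notin S -> forall i, i \in S -> tau i = i.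
  move=> S pS jS i iS; rewrite tpermD //.
    by apply: contraNneq pS => ->.
  by apply: contraNneq jS => ->.
have Xtau : forall s v, X (tau * s)%g v = X s v.
  move=> s v; rewrite /X !PS_fix //; apply: fixt => //.
    by rewrite !inE eqxx.
  by rewrite !inE negb_and jA orbT.
have E1 : forall v, DD A (p |: T) v = \sum_s X s v * t (s p) v ^+ 2.
  move=> v; apply: eq_bigr => s _; rewrite /PS (big_setD1 _ pA) big_setU1 //= /X /PS.
  by rewrite expr2; ring.
have E2 : forall v, DD A (j |: T) v = \sum_s X s v * (t (s p) v * t (s j) v).
  move=> v; apply: eq_bigr => s _; rewrite /PS (big_setD1 _ pA) big_setU1 //= /X /PS.
  by ring.
have E3 : forall v, \sum_s X s v * t (s p) v ^+ 2 = \sum_s X s v * t (s j) v ^+ 2.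
  move=> v; rewrite (reindex_inj (mulgI tau)) /=; apply: eq_bigr => s _.
  by rewrite Xtau permM tpermL.
apply: (sos_ext (f := fun v => \sum_s (2%:R^-1 * X s v) * (t (s p) v - t (s j) v) ^+ 2)).
  apply: sos_sum => s _; apply: sos_mul.
    by apply: sos_scale; [rewrite invr_ge0 ler0n | apply: XS].
  by apply: sos_sq; apply: isP_sub; apply: tP.
move=> v; rewrite E1 E2.
have -> : \sum_s X s v * t (s p) v ^+ 2 =
   2%:R^-1 * \sum_s X s v * t (s p) v ^+ 2 + 2%:R^-1 * \sum_s X s v * t (s j) v ^+ 2.
  by rewrite -E3; field.
rewrite !mulr_sumr -big_split -sumrB /=; apply: eq_bigr => s _.
by field.
Qed.

Lemma DD_eq (A T : {set 'I_d}) (p j : 'I_d) : p \notin A -> j \notin A -> p \notin T -> j \notin T ->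
  forall v, DD A (p |: T) v = DD A (j |: T) v.
Proof.
move=> pA jA pT jT v.
have [->|pj] := eqVneq p j; first by [].
set tau := tperm p j.
have fixS : forall S : {set 'I_d}, p \notin S -> j \notin S -> forall s : {perm 'I_d}, PS S (tau * s)%g v = PS S s v.
  move=> S pS jS s; apply: PS_fix => i iS; rewrite tpermD //.
    by apply: contraNneq pS => ->.
  by apply: contraNneq jS => ->.
rewrite /DD (reindex_inj (mulgI tau)) /=; apply: eq_bigr => s _.
rewrite fixS // /PS !big_setU1 //= permM tpermL.
have := fixS T pT jT s; rewrite /PS => ->; by [].
Qed.

Lemma DD_ladder (A B : {set 'I_d}) : (forall j, j \in B -> j \notin A) ->
  forall S : {set 'I_d}, #|S| = #|B| -> sos (fun v => DD A S v - DD A B v).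
Proof.
move=> dAB S; have [n] := ubnP #|S :\: B|; elim: n S => [//|n IH] S Hn HS.
have [sSB|nsSB] := boolP (S \subset B).
  have /eqP -> : S == B by rewrite eqEcard sSB HS leqnn.
  by apply: (sos_ext (sos0 _ _)) => v; rewrite subrr.
have [x xS xB] : exists2 x, x \in S & x \notin B.
  by move/fintype.subsetPn: nsSB => [x ? ?]; exists x.
have [y yB yS] : exists2 y, y \in B & y \notin S.
  have [sBS|/fintype.subsetPn [y ? ?]] := boolP (B \subset S); last by exists y.
  have /eqP eBS : B == S by rewrite eqEcard sBS HS leqnn.
  by rewrite eBS xS in xB.
set T := S :\ x.
have xT : x \notin T by rewrite !inE eqxx.
have yT : y \notin T by rewrite !inE negb_and yS orbT.
have eS : S = x |: T by rewrite /T finset.setD1K.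
set S' := y |: T.
have cS' : #|S'| = #|B| by rewrite -HS eS !cardsU1 xT yT.
have lt : (#|S' :\: B| < n)%N.
  rewrite -ltnS; apply: leq_trans Hn; apply: proper_card; apply/properP; split.
    apply/fintype.subsetP => z; rewrite !inE => /andP [zB /orP [/eqP zy|/andP [zx zS]]].
      by rewrite zy yB in zB.
    by rewrite zB zS.
  exists x; first by rewrite !inE xB xS.
  rewrite !inE xB eqxx /= negb_or andbT; apply/eqP => exy.
  by rewrite exy yB in xB.
have IH' := IH S' lt cS'.
apply: (sos_ext (sos_add _ IH')) => [|v]; last first.
  by instantiate (1 := fun v => DD A S v - DD A S' v); rewrite /= subrKA.
rewrite eS; have [xA|xA] := boolP (x \in A).
  apply: DD_swap => //; exact: dAB.
apply: (sos_ext (sos0 _ _)) => v; rewrite (DD_eq xA (dAB y yB) xT yT) subrr.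
by [].
Qed.

Definition Eh (X : {set 'I_d}) v := (d`!%:R)^-1 * \sum_(s : {perm 'I_d}) PS X s v.

Lemma Eh_mul (A B : {set 'I_d}) : (forall j, j \in B -> j \notin A) ->
  sos (fun v => Eh A v * Eh B v - Eh (A :|: B) v).
Proof.
move=> dAB.
have dis : [disjoint A & B].
  by rewrite disjoint_subset; apply/fintype.subsetP => i iA; rewrite inE; exact: (contraL (dAB i) iA).
set c := (d`!%:R : R)^-1.
have c0 : 0 <= c by rewrite invr_ge0 ler0n.
have E1 : forall v, Eh A v * Eh B v = c ^+ 2 * \sum_(r : {perm 'I_d}) DD A (r @: B) v.
  move=> v; rewrite /Eh -/c.
  suff -> : \sum_(r : {perm 'I_d}) DD A (r @: B) v =
     (\sum_(s : {perm 'I_d}) PS A s v) * (\sum_(s : {perm 'I_d}) PS B s v) by ring.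
  rewrite mulr_suml /DD exchange_big /=; apply: eq_bigr => s _.
  rewrite mulr_sumr [RHS](reindex_inj (mulIg s)) /=; apply: eq_bigr => r _.
  congr (_ * _); rewrite /PS big_imset /=; last by move=> x y _ _; apply: perm_inj.
  by apply: eq_bigr => i _; rewrite permM.
have E2 : forall v, Eh (A :|: B) v = c ^+ 2 * \sum_(r : {perm 'I_d}) DD A B v.
  move=> v; rewrite sumr_const card_Sn /Eh -/c.
  have -> : \sum_s PS (A :|: B) s v = DD A B v.
    apply: eq_bigr => s _; rewrite /PS (eq_bigl [predU A & B]) ?bigU //.
    by move=> i; rewrite !inE.
  rewrite /c -mulr_natr; field.
  by rewrite pnatr_eq0 -lt0n fact_gt0.
apply: (sos_ext (f := fun v => \sum_(r : {perm 'I_d}) c ^+ 2 * (DD A (r @: B) v - DD A B v))).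
  apply: sos_sum => r _; apply: sos_scale; first by rewrite exprn_ge0.
  by apply: DD_ladder => //; rewrite card_imset //; apply: perm_inj.
by move=> v; rewrite E1 E2 -mulrBr -sumrB mulr_sumr.
Qed.

End Core.

Lemma exists_sub (T : finType) (U : {set T}) r :
  (r <= #|U|)%N -> exists2 X : {set T}, X \subset U & #|X| = r.
Proof.
elim: r => [|r IH] H.
  by exists finset.set0; [apply: finset.sub0set | apply: cards0].
have [X sXU cX] := IH (ltnW H).
have [x xU xX] : exists2 x, x \in U & x \notin X.
  have [sUX|/fintype.subsetPn [x ? ?]] := boolP (U \subset X); last by exists x.
  by have := subset_leq_card sUX; rewrite cX leqNgt H.
exists (x |: X); first by rewrite finset.subUset finset.sub1set xU sXU.
by rewrite cardsU1 xX cX.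
Qed.

Section Abstract.
Variables (R : realType) (N d : nat) (t : 'I_d -> ('I_N -> R) -> R) (q : ('I_N -> R) -> R).
Hypothesis tP : forall i, isP (t i).
Hypothesis tS : forall i, sos (t i).
Hypothesis qS : sos q.

Definition Ef r v := elemE r (fun i => t i v).

Lemma Ef_Eh (X : {set 'I_d}) v : Ef #|X| v = Eh t X v.
Proof. by rewrite /Ef elemE_perm. Qed.

Lemma Ef_sos r : (r <= d)%N -> sos (Ef r).
Proof.
move=> rd; have [X _ cX] : exists2 X : {set 'I_d}, X \subset [set: 'I_d] & #|X| = r.
  by apply: exists_sub; rewrite cardsT card_ord.
apply: (sos_ext (f := Eh t X)) => [|v]; last by rewrite -Ef_Eh cX.
apply: sos_scale; first by rewrite invr_ge0 ler0n.
by apply: sos_sum => s _; apply: PS_sos.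
Qed.

Lemma Ef_mul a b : (a + b <= d)%N ->
  sos (fun v => Ef a v * Ef b v - Ef (a + b) v).
Proof.
move=> abd.
have [A _ cA] : exists2 A : {set 'I_d}, A \subset [set: 'I_d] & #|A| = a.
  by apply: exists_sub; rewrite cardsT card_ord; apply: leq_trans abd; apply: leq_addr.
have [B sB cB] : exists2 B : {set 'I_d}, B \subset ~: A & #|B| = b.
  apply: exists_sub; have := cardsC A; rewrite cA card_ord => HC; by rewrite -(leq_add2l a) HC.
have dAB : forall j, j \in B -> j \notin A.
  by move=> j jB; move/fintype.subsetP: sB => /(_ j jB); rewrite inE.
have cAB : #|A :|: B| = (a + b)%N.
  have := cardsUI A B.
  have -> : A :&: B = finset.set0.
    apply/setP => i; rewrite !inE; apply/negP => /andP [iA iB].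
    by move: (dAB i iB); rewrite iA.
  by rewrite cards0 addn0 cA cB.
apply: (sos_ext (Eh_mul tP tS dAB)) => v.
by rewrite -!Ef_Eh cA cB cAB.
Qed.

Definition Ff r (lam : R) v := lam * q v ^+ r - Ef r v.

Lemma Ff_mult k lam : (0 <= lam) -> sos (Ff k lam) ->
  forall m, (0 < m)%N -> (m * k <= d)%N -> sos (Ff (m * k) (lam ^+ m)).
Proof.
move=> l0 Hk; elim => [//|m IH] _ Hmk.
case: m IH Hmk => [|m] IH Hmk.
  by apply: (sos_ext Hk) => v; rewrite mul1n expr1.
have Hmk' : (m.+1 * k <= d)%N by apply: leq_trans Hmk; rewrite leq_mul2r leqnSn orbT.
have IH' := IH isT Hmk'.
have kd : (k <= d)%N by apply: leq_trans Hmk; rewrite leq_pmull.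
have Hm := Ef_mul (a := k) (b := m.+1 * k).
rewrite -mulSn in Hm; have Hm' := Hm Hmk.
have qk : sos (fun v => lam ^+ m.+1 * q v ^+ (m.+1 * k)).
  by apply: sos_scale; [apply: exprn_ge0 | apply: sos_exp].
apply: (sos_ext (sos_add Hm' (sos_add (sos_mul (Ef_sos kd) IH') (sos_mul Hk qk)))).
move=> v; rewrite /Ff (mulSn m.+1 k) exprD [lam ^+ _.+2]exprS.
ring.
Qed.

Lemma Ff_feas r c : (r <= d)%N -> 0 <= c ->
  (forall i, sos (fun v => c * q v - t i v)) -> sos (Ff r (c ^+ r)).
Proof.
move=> rd c0 Hc.
have [X _ cX] : exists2 X : {set 'I_d}, X \subset [set: 'I_d] & #|X| = r.
  by apply: exists_sub; rewrite cardsT card_ord.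
have tS' : forall (s : {perm 'I_d}) i, sos (fun v => c * q v - t (s i) v).
  by move=> s i; apply: Hc.
apply: (sos_ext (f := fun v => (d`!%:R)^-1 * \sum_(s : {perm 'I_d})
     (\prod_(i <- enum X) (c * q v) - \prod_(i <- enum X) t (s i) v))).
  apply: sos_scale; first by rewrite invr_ge0 ler0n.
  apply: sos_sum => s _.
  apply: (@sos_prod_mono _ _ _ (enum X) (fun i => t (s i)) (fun _ v => c * q v)) => i.
    exact: tS.
  exact: tS' s i.
move=> v; rewrite /Ff -cX Ef_Eh /Eh /PS sumrB mulrBr.
congr (_ - _); last by congr (_ * _); apply: eq_bigr => s _; rewrite big_enum.
rewrite sumr_const card_Sn big_enum prodr_const cX exprMn -mulr_natr.
field; by rewrite pnatr_eq0 -lt0n fact_gt0.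
Qed.

End Abstract.

Section InfSec.
Local Open Scope classical_set_scope.

Lemma inf_step (R : realType) (F1 F2 : set R) (k m : nat) :
  (0 < k)%N -> (0 < m)%N -> (exists l, F1 l) -> (forall l, F1 l -> 0 <= l) ->
  (forall l, F1 l -> F2 (l ^+ m)) ->
  inf [set powR l ((m * k)%:R^-1) | l in F2] <= inf [set powR l (k%:R^-1) | l in F1].
Proof.
move=> k0 m0 [l0 Hl0] F1ge F12.
apply: lb_le_inf; first by exists (powR l0 (k%:R^-1)), l0.
move=> _ [l Hl <-].
have hl : has_lbound [set powR l ((m * k)%:R^-1) | l in F2].
  by exists 0 => _ [x _ <-]; apply: powR_ge0.
apply: (ge_inf hl); exists (l ^+ m); first exact: F12.
rewrite -powR_mulrn; last exact: F1ge.
rewrite -powRrM natrM invfM mulrA mulfV ?mul1r //.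
by rewrite pnatr_eq0 -lt0n.
Qed.

End InfSec.

Section Herm.
Local Open Scope sesquilinear_scope.
Variables (R : realType) (n : nat).
Local Notation C := (R[i]).

Lemma formC_conj (P N : 'M[C]_n) x :
  Defs.formC (P ^t* *m N *m P) x = Defs.formC N (P *m x).
Proof.
have E : (map_mx Num.conj (P *m x))^T = (map_mx Num.conj x)^T *m P ^t*.
  apply/matrixP => i j; rewrite !mxE rmorph_sum; apply: eq_bigr => k _; rewrite !mxE rmorphM mulrC. by [].
by rewrite /Defs.formC E !mulmxA.
Qed.

Lemma formC_diag (D : 'rV[C]_n) y :
  Defs.formC (diag_mx D) y = \sum_j D 0 j * (Num.conj (y j 0) * y j 0).
Proof.
rewrite /Defs.formC mul_mx_diag mxE; apply: eq_bigr => j _.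
by rewrite !mxE; ring.
Qed.

Lemma herm_decomp (M : 'M[C]_n) : (map_mx Num.conj M)^T = M ->
  (forall x, 0 <= Defs.formC M x) ->
  exists (P : 'M[C]_n) (D : 'I_n -> R), (forall j, 0 <= D j) /\
   (forall x, Defs.formC M x = \sum_j (D j)%:C%C * (Num.conj ((P *m x) j 0) * (P *m x) j 0)) /\
   (forall x, Defs.formC 1%:M x = \sum_j (Num.conj ((P *m x) j 0) * (P *m x) j 0)).
Proof.
move=> Mh Mpsd.
have Hh : M \is hermsymmx.
  apply/is_hermitianmxP; rewrite expr0 scale1r; by rewrite -[LHS]Mh map_trmx.
have /orthomx_spectralP HM := hermitian_normalmx Hh.
set P := spectralmx M in HM; set D := spectral_diag M in HM.
have Pu : P \is unitarymx := spectral_unitarymx M.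
have iP : invmx P = P ^t* := invmx_unitary Pu.
have PtP : P ^t* *m P = 1%:M by rewrite -iP mulVmx // spectral_unit.
have PPt : P *m P ^t* = 1%:M by apply/unitarymxP.
have Dr : forall j, (complex.Re (D 0 j))%:C%C = D 0 j.
  move=> j; apply: RRe_real.
  by have /mxOverP := hermitian_spectral_diag_real Hh; apply.
have HM' : M = P ^t* *m diag_mx D *m P by rewrite -iP.
have formM : forall x, Defs.formC M x = \sum_j D 0 j * (Num.conj ((P *m x) j 0) * (P *m x) j 0).
  by move=> x; rewrite {1}HM' formC_conj formC_diag.
exists P, (fun j => complex.Re (D 0 j)); split; last split.
- move=> j; have := Mpsd (P ^t* *m delta_mx j 0).
  rewrite formM mulmxA PPt mul1mx (bigD1 j) //= big1 => [|l lj]; last first.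
    by rewrite !mxE (negbTE lj) /= conjC0 !mul0r mulr0.
  rewrite !mxE !eqxx /= conjC1 !mulr1 addr0 -Dr.
  by rewrite ler0c.
- by move=> x; rewrite formM; apply: eq_bigr => j _; rewrite Dr.
- move=> x; have E1 : (1%:M : 'M[C]_n) = P ^t* *m 1%:M *m P by rewrite mulmx1 PtP.
  rewrite {1}E1 formC_conj.
  rewrite /Defs.formC mulmx1; rewrite mxE; apply: eq_bigr => j _.
  by rewrite !mxE.
Qed.
End Herm.

Section Herm2.
Variables (R : realType) (n N : nat).
Local Notation C := (R[i]).
Local Notation Re := complex.Re.
Local Notation Im := complex.Im.

Lemma normC2 (y : C) : Num.conj y * y = ((Re y)^+2 + (Im y)^+2)%:C%C.
Proof. case: y => a b; rewrite /=. apply/eqP; rewrite eq_complex /=; apply/andP; split; apply/eqP; ring. Qed.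
Lemma ReM (a b : C) : Re (a * b) = Re a * Re b - Im a * Im b.
Proof. by case: a => ? ?; case: b => ? ?. Qed.
Lemma ImM (a b : C) : Im (a * b) = Re a * Im b + Im a * Re b.
Proof. by case: a => ? ?; case: b => ? ?. Qed.
Lemma ReD (a b : C) : Re (a + b) = Re a + Re b.
Proof. by case: a => ? ?; case: b => ? ?. Qed.
Lemma ImD (a b : C) : Im (a + b) = Im a + Im b.
Proof. by case: a => ? ?; case: b => ? ?. Qed.
Lemma Re_sum (I : Type) (r : seq I) (F : I -> C) : Re (\sum_(i <- r) F i) = \sum_(i <- r) Re (F i).
Proof. by elim: r => [|x r IH]; rewrite ?big_nil ?big_cons ?ReD ?IH. Qed.
Lemma Im_sum (I : Type) (r : seq I) (F : I -> C) : Im (\sum_(i <- r) F i) = \sum_(i <- r) Im (F i).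
Proof. by elim: r => [|x r IH]; rewrite ?big_nil ?big_cons ?ImD ?IH. Qed.

Variable L : ('I_N -> R) -> 'cV[C]_n.
Hypothesis LRe : forall l, isP (fun v => Re (L v l 0)).
Hypothesis LIm : forall l, isP (fun v => Im (L v l 0)).

Lemma isP_mulL (P : 'M[C]_n) j :
  isP (fun v => Re ((P *m L v) j 0)) /\ isP (fun v => Im ((P *m L v) j 0)).
Proof.
split.
  apply: (isP_ext (f := fun v => \sum_l (Re (P j l) * Re (L v l 0) - Im (P j l) * Im (L v l 0)))).
    apply: isP_sum => l _; apply: isP_sub; apply: isP_mul; by [apply: isP_const| ].
  by move=> v; rewrite mxE Re_sum; apply: eq_bigr => l _; rewrite ReM.
apply: (isP_ext (f := fun v => \sum_l (Re (P j l) * Im (L v l 0) + Im (P j l) * Re (L v l 0)))).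
  apply: isP_sum => l _; apply: isP_add; apply: isP_mul; by [apply: isP_const| ].
by move=> v; rewrite mxE Im_sum; apply: eq_bigr => l _; rewrite ImM.
Qed.

Lemma herm_sos (M : 'M[C]_n) : (map_mx Num.conj M)^T = M ->
  (forall x, 0 <= Defs.formC M x) ->
  [/\ isP (fun v => Re (Defs.formC M (L v))),
      sos (fun v => Re (Defs.formC M (L v))),
      (forall v, Defs.formC M (L v) = (Re (Defs.formC M (L v)))%:C%C) &
      exists2 c, 0 <= c & sos (fun v => c * Re (Defs.formC 1%:M (L v)) - Re (Defs.formC M (L v)))].
Proof.
move=> Mh Mpsd; have [P [D [D0 [HM H1]]]] := herm_decomp Mh Mpsd.
pose w j v := Re ((P *m L v) j 0) ^+ 2 + Im ((P *m L v) j 0) ^+ 2.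
have wS : forall j, sos (w j).
  move=> j; have [h1 h2] := isP_mulL P j.
  by apply: sos_add; apply: sos_sq.
have wP : forall j, isP (w j).
  move=> j; have [h1 h2] := isP_mulL P j.
  by apply: isP_add; apply: isP_mul.
have EM : forall v, Defs.formC M (L v) = (\sum_j D j * w j v)%:C%C.
  by move=> v; rewrite HM rmorph_sum; apply: eq_bigr => j _; rewrite normC2 rmorphM.
have E1 : forall v, Defs.formC 1%:M (L v) = (\sum_j w j v)%:C%C.
  by move=> v; rewrite H1 rmorph_sum; apply: eq_bigr => j _; rewrite normC2.
split.
- apply: (isP_ext (f := fun v => \sum_j D j * w j v)); last by move=> v; rewrite EM.
  by apply: isP_sum => j _; apply: isP_mul; [apply: isP_const|].
- apply: (sos_ext (f := fun v => \sum_j D j * w j v)); last by move=> v; rewrite EM.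
  by apply: sos_sum => j _; apply: sos_scale.
- by move=> v; rewrite {2}EM.
exists (\sum_j D j); first by apply: sumr_ge0.
apply: (sos_ext (f := fun v => \sum_j (\sum_l D l - D j) * w j v)).
  apply: sos_sum => j _; apply: sos_scale => //.
  rewrite subr_ge0 (bigD1 j) //= lerDl; apply: sumr_ge0 => l _; exact: D0.
by move=> v; rewrite E1 EM /= mulr_sumr -sumrB; apply: eq_bigr => j _; rewrite mulrBl.
Qed.

End Herm2.

Section Cx.
Variables (R : realType) (n : nat).
Local Notation C := (R[i]).
Local Notation Re := (@complex.Re R).
Local Notation Im := (@complex.Im R).
Local Notation rc := (real_complex R).

Lemma formC_sum (M : 'M[C]_n) z :
  Defs.formC M z = \sum_j \sum_i Num.conj (z i 0) * M i j * z j 0.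
Proof.
rewrite /Defs.formC mxE; apply: eq_bigr => j _; rewrite mxE mulr_suml.
by apply: eq_bigr => i _; rewrite !mxE.
Qed.

Lemma formR_sum (M : 'M[R]_n) u :
  Defs.formR M u = \sum_j \sum_i u i 0 * M i j * u j 0.
Proof.
rewrite /Defs.formR mxE; apply: eq_bigr => j _; rewrite mxE mulr_suml.
by apply: eq_bigr => i _; rewrite !mxE.
Qed.

Lemma formC_real (A : 'M[R]_n) z : A^T = A ->
  Defs.formC (map_mx rc A) z =
  (Defs.formR A (map_mx Re z) + Defs.formR A (map_mx Im z))%:C%C.
Proof.
move=> As; apply/eqP; rewrite eq_complex; apply/andP; split; apply/eqP.
  rewrite formC_sum !formR_sum Re_sum /= -big_split; apply: eq_bigr => j _.
  rewrite Re_sum -big_split; apply: eq_bigr => i _; rewrite !mxE.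
  by case: (z i 0) => a b; case: (z j 0) => c e /=; ring.
rewrite formC_sum Im_sum /=.
have -> : \sum_j Im (\sum_i Num.conj (z i 0) * map_mx rc A i j * z j 0) =
   \sum_j \sum_i (A i j * Re (z i 0) * Im (z j 0)) - \sum_j \sum_i (A i j * Im (z i 0) * Re (z j 0)).
  rewrite -sumrB; apply: eq_bigr => j _; rewrite Im_sum -sumrB; apply: eq_bigr => i _.
  rewrite !mxE.
  by case: (z i 0) => a b; case: (z j 0) => c e /=; ring.
rewrite [X in _ - X]exchange_big /=; apply/eqP; rewrite subr_eq0; apply/eqP.
apply: eq_bigr => j _; apply: eq_bigr => i _.
have -> : A j i = A i j by rewrite -[in LHS]As mxE.
ring.
Qed.

Lemma map_rc_herm (A : 'M[R]_n) : A^T = A -> (map_mx Num.conj (map_mx rc A))^T = map_mx rc A.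
Proof.
move=> As; apply/matrixP => i j; rewrite !mxE.
have -> : A j i = A i j by rewrite -[in LHS]As mxE.
by apply/eqP; rewrite eq_complex /= oppr0 !eqxx.
Qed.

Lemma map_rc_psd (A : 'M[R]_n) : Defs.psdR A -> forall z, 0 <= Defs.formC (map_mx rc A) z.
Proof.
move=> [As Ap] z; rewrite formC_real // ler0c.
by apply: addr_ge0; apply: Ap.
Qed.

Lemma elemE_rc d k (f : 'I_d -> R) : elemE k (fun i => (f i)%:C%C) = (elemE k f)%:C%C.
Proof.
rewrite /elemE rmorphM fmorphV rmorph_nat rmorph_sum; congr (_ * _).
by apply: eq_bigr => I _; rewrite rmorph_prod.
Qed.

End Cx.

Lemma assemble (R : realType) N d k m (t : 'I_d -> ('I_N -> R) -> R) (q : ('I_N -> R) -> R)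
  (F : nat -> R -> Prop) :
  (forall i, isP (t i)) -> (forall i, sos (t i)) -> sos q ->
  (exists2 c, 0 <= c & forall i, sos (fun v => c * q v - t i v)) ->
  (forall r lam, F r lam <-> (0 <= lam /\ sos (Ff t q r lam))) ->
  (0 < k)%N -> (0 < m)%N -> (m * k <= d)%N ->
  inf [set powR l ((m * k)%:R^-1) | l in F (m * k)%N] <=
  inf [set powR l (k%:R^-1) | l in F k].
Proof.
move=> tP tS qS [c c0 Hc] HF k0 m0 mkd.
have kd : (k <= d)%N by apply: leq_trans mkd; rewrite leq_pmull.
apply: inf_step => //.
- exists (c ^+ k); apply/HF; split; first exact: exprn_ge0.
  exact: Ff_feas.
- by move=> l /HF [].
- move=> l /HF [l0 Hl]; apply/HF; split; first exact: exprn_ge0.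
  exact: Ff_mult.
Qed.

Lemma unif_bound (R : realType) N d (t : 'I_d -> ('I_N -> R) -> R) (q : ('I_N -> R) -> R) :
  sos q -> (forall i, exists2 c, 0 <= c & sos (fun v => c * q v - t i v)) ->
  exists2 c, 0 <= c & forall i, sos (fun v => c * q v - t i v).
Proof.
move=> qS Hb.
suff /(_ (enum 'I_d)) [c c0 Hc] : forall s : seq 'I_d, exists2 c, 0 <= c & forall i, i \in s -> sos (fun v => c * q v - t i v).
  by exists c => // i; apply: Hc; rewrite mem_enum.
elim => [|x s [c c0 Hc]]; first by exists 0.
have [cx cx0 Hx] := Hb x.
exists (c + cx); first exact: addr_ge0.
move=> i; rewrite in_cons => /orP [/eqP ->|Hi].
  apply: (sos_ext (sos_add (sos_scale c0 qS) Hx)) => v; ring.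
apply: (sos_ext (sos_add (sos_scale cx0 qS) (Hc i Hi))) => v; ring.
Qed.

Section RealCase.
Variables (R : realType) (n d : nat) (A : 'I_d -> 'M[R]_n).
Hypothesis HA : forall i, Defs.psdR (A i).
Local Notation rc := (real_complex R).
Local Notation Re := (@complex.Re R).
Local Notation Im := (@complex.Im R).

Let L (v : 'I_n -> R) : 'cV[R[i]]_n := map_mx rc (Defs.vecR v).

Lemma LRe_R l : isP (fun v => Re (L v l 0)).
Proof. by apply: (isP_ext (isP_var R l)) => v; rewrite !mxE. Qed.
Lemma LIm_R l : isP (fun v => Im (L v l 0)).
Proof. by apply: (isP_ext (isP_const n 0)) => v; rewrite !mxE. Qed.

Lemma keyR (M : 'M[R]_n) v : M^T = M ->
  Re (Defs.formC (map_mx rc M) (L v)) = Defs.formR M (Defs.vecR v).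
Proof.
move=> Ms; rewrite formC_real //=.
have -> : map_mx Re (L v) = Defs.vecR v by apply/matrixP => i j; rewrite !mxE.
have -> : map_mx Im (L v) = 0 by apply/matrixP => i j; rewrite !mxE.
have f0 : Defs.formR M 0 = 0 by rewrite /Defs.formR mulmx0 !mxE.
by rewrite f0 addr0.
Qed.

Lemma formR1 (x : 'cV[R]_n) : Defs.formR 1%:M x = \sum_j x j 0 ^+ 2.
Proof.
by rewrite /Defs.formR mulmx1 mxE; apply: eq_bigr => j _; rewrite !mxE expr2.
Qed.

Lemma caseR k m : (0 < k)%N -> (0 < m)%N -> (m * k <= d)%N ->
  Defs.SRelR (m * k) A <= Defs.SRelR k A.
Proof.
move=> k0 m0 mkd.
pose t i v := Defs.formR (A i) (Defs.vecR v).
pose q := fun v : 'I_n -> R => Defs.formR 1%:M (Defs.vecR v).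
have H i := herm_sos LRe_R LIm_R (map_rc_herm (HA i).1) (map_rc_psd (HA i)).
have tP : forall i, isP (t i).
  move=> i; have [h _ _ _] := H i.
  by apply: (isP_ext h) => v; rewrite keyR //; case: (HA i).
have tS : forall i, sos (t i).
  move=> i; have [_ h _ _] := H i.
  by apply: (sos_ext h) => v; rewrite keyR //; case: (HA i).
have qS : sos q.
  apply: (sos_ext (f := fun v => \sum_j v j ^+ 2)).
    by apply: sos_sum => j _; apply: sos_sq; exact: (isP_var R j).
  by move=> v; rewrite /q formR1; apply: eq_bigr => j _; rewrite mxE.
have map1 : map_mx rc (1%:M : 'M[R]_n) = 1%:M by rewrite map_scalar_mx rmorph1.
have Hb : forall i, exists2 c, 0 <= c & sos (fun v => c * q v - t i v).
  move=> i; have [_ _ _ [c c0 h]] := H i; exists c => //.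
  apply: (sos_ext h) => v; rewrite keyR; last by case: (HA i).
  by rewrite -map1 keyR // trmx1.
have [c c0 Hc] : exists2 c, 0 <= c & forall i, sos (fun v => c * q v - t i v).
  exact: unif_bound.
apply: (assemble (F := fun r lam => Defs.feasR r A lam) tP tS qS (ex_intro2 _ _ c c0 Hc)) => //.
Qed.
End RealCase.

Lemma elemE_ext (K : fieldType) d k (f g : 'I_d -> K) : f =1 g -> elemE k f = elemE k g.
Proof.
move=> fg; rewrite /elemE; congr (_ * _); apply: eq_bigr => I _.
by apply: eq_bigr => i _; rewrite fg.
Qed.

Section CplxCase.
Variables (R : realType) (n d : nat) (A : 'I_d -> 'M[R[i]]_n).
Hypothesis HA : forall i, Defs.psdC (A i).
Local Notation rc := (real_complex R).
Local Notation Re := (@complex.Re R).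
Local Notation Im := (@complex.Im R).

Let L (v : 'I_(n + n) -> R) : 'cV[R[i]]_n := Defs.vecC v.

Lemma LRe_C l : isP (fun v => Re (L v l 0)).
Proof. by apply: (isP_ext (isP_var R (lshift n l))) => v; rewrite !mxE. Qed.
Lemma LIm_C l : isP (fun v => Im (L v l 0)).
Proof. by apply: (isP_ext (isP_var R (rshift n l))) => v; rewrite !mxE. Qed.

Lemma formC1 (x : 'cV[R[i]]_n) :
  Defs.formC 1%:M x = (\sum_j (Re (x j 0) ^+ 2 + Im (x j 0) ^+ 2))%:C%C.
Proof.
rewrite /Defs.formC mulmx1 mxE rmorph_sum; apply: eq_bigr => j _.
by rewrite !mxE normC2.
Qed.

Lemma caseC k m : (0 < k)%N -> (0 < m)%N -> (m * k <= d)%N ->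
  Defs.SRelC (m * k) A <= Defs.SRelC k A.
Proof.
move=> k0 m0 mkd.
pose t i v := Re (Defs.formC (A i) (L v)).
pose q := fun v : 'I_(n + n) -> R => Re (Defs.formC 1%:M (L v)).
have H i := herm_sos LRe_C LIm_C (HA i).1 (HA i).2.
have tP : forall i, isP (t i) by move=> i; have [h _ _ _] := H i.
have tS : forall i, sos (t i) by move=> i; have [_ h _ _] := H i.
have teq : forall i v, Defs.formC (A i) (Defs.vecC v) = (t i v)%:C%C.
  by move=> i v; have [_ _ h _] := H i; apply: h.
have qeq : forall v, Defs.formC 1%:M (Defs.vecC v) = (q v)%:C%C.
  by move=> v; rewrite /q /L formC1.
have qS : sos q.
  apply: (sos_ext (f := fun v => \sum_j (Re (L v j 0) ^+ 2 + Im (L v j 0) ^+ 2))).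
    by apply: sos_sum => j _; apply: sos_add; apply: sos_sq; [apply: LRe_C|apply: LIm_C].
  by move=> v; rewrite /q formC1.
have Hb : forall i, exists2 c, 0 <= c & sos (fun v => c * q v - t i v).
  by move=> i; have [_ _ _ h] := H i.
have [c c0 Hc] := unif_bound qS Hb.
apply: (assemble (F := fun r lam => Defs.feasC r A lam) tP tS qS (ex_intro2 _ _ c c0 Hc)) => //.
move=> r lam; have E : forall v,
   (lam%:C * Defs.formC 1%:M (Defs.vecC v) ^+ r - elemE r (fun i => Defs.formC (A i) (Defs.vecC v)))%C
   = (Ff t q r lam v)%:C%C.
  move=> v; rewrite qeq (elemE_ext r (teq^~ v)) elemE_rc /Ff /Ef.
  by rewrite [RHS]rmorphB; congr (_ - _); rewrite rmorphM rmorphXn.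
split.
  move=> [l0 [s Hs]]; split => //; exists s => v.
  by apply: complexI; rewrite -E Hs.
move=> [l0 [s Hs]]; split => //; exists s => v.
by rewrite E Hs.
Qed.
End CplxCase.

Theorem mainTheorem13 (R : realType) (n d k m : nat) :
  (0 < k)%N -> (0 < m)%N -> (m * k <= d)%N ->
  (forall A : 'I_d -> 'M[R]_n, (forall i, psdR (A i)) ->
     SRelR (m * k) A <= SRelR k A) /\
  (forall A : 'I_d -> 'M[R[i]]_n, (forall i, psdC (A i)) ->
     SRelC (m * k) A <= SRelC k A).
Proof.
move=> k0 m0 mkd; split => A HA; [exact: caseR | exact: caseC].
Qed.
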